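(* Let $M\in\{0,1\}^{m\times n}$. Then $\operatorname{disc}^{-}(M)\geq \operatorname{disc}^{+}(M)/3$ and $\operatorname{disc}^{+}(M)\geq \operatorname{disc}^{-}(M)/3$; in particular $\operatorname{disc}^+(M)=\Theta(\operatorname{disc}^-(M))$.
   Context: For $M\in\{0,1\}^{m\times n}$, $|M|$ is the number of $1$ entries, $p=|M|/(mn)$, and for $X\subset[m]$, $Y\subset[n]$, $\operatorname{disc}(X,Y)=|M[X\times Y]|-p|X||Y|$, where $|M[X\times Y]|$ is the number of $1$ entries of the submatrix with rows $X$ and columns $Y$. The positive discrepancy is $\operatorname{disc}^{+}(M)=\max_{X\subset[m],Y\subset[n]}\operatorname{disc}(X,Y)$ and the negative discrepancy is $\operatorname{disc}^{-}(M)=\max_{X\subset[m],Y\subset[n]}(-\operatorname{disc}(X,Y))$. *)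

(* Defs.v *)
From mathcomp Require Import all_boot all_order all_algebra.
Set Implicit Arguments. Unset Strict Implicit. Unset Printing Implicit Defensive.
Import Order.TTheory GRing.Theory Num.Theory.
Local Open Scope ring_scope.

Definition ones_in (m n : nat) (M : 'M[bool]_(m, n)) (X : {set 'I_m}) (Y : {set 'I_n}) : nat :=
  #|[set ij : 'I_m * 'I_n | (ij.1 \in X) && (ij.2 \in Y) && M ij.1 ij.2]|.

Definition ones (m n : nat) (M : 'M[bool]_(m, n)) : nat := ones_in M setT setT.

(* density p = |M| / (mn)  (for m n = 0 the value is irrelevant, as |X||Y| = 0) *)
Definition density (m n : nat) (M : 'M[bool]_(m, n)) : rat := (ones M)%:R / (m * n)%:R.

Definition disc (m n : nat) (M : 'M[bool]_(m, n)) (X : {set 'I_m}) (Y : {set 'I_n}) : rat :=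
  (ones_in M X Y)%:R - density M * (#|X| * #|Y|)%:R.

(* maximum over all X, Y (disc(empty,empty) = 0, so seeding the max with 0 is harmless) *)
Definition disc_plus (m n : nat) (M : 'M[bool]_(m, n)) : rat :=
  \big[Num.max/0]_(X : {set 'I_m}) \big[Num.max/0]_(Y : {set 'I_n}) disc M X Y.

Definition disc_minus (m n : nat) (M : 'M[bool]_(m, n)) : rat :=
  \big[Num.max/0]_(X : {set 'I_m}) \big[Num.max/0]_(Y : {set 'I_n}) - disc M X Y.

(* Main.v *)
Require Import Defs.
From mathcomp Require Import all_boot all_order all_algebra.
From mathcomp Require Import lra.
Set Implicit Arguments. Unset Strict Implicit.
Import Order.TTheory GRing.Theory Num.Theory.
Local Open Scope ring_scope.

Lemma ones_splitX (m n : nat) (M : 'M[bool]_(m, n)) X Y :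
  (ones_in M X Y + ones_in M (~: X) Y = ones_in M setT Y)%N.
Proof.
rewrite /ones_in -(cardsID [set ij : 'I_m * 'I_n | ij.1 \in X]
   [set ij : 'I_m * 'I_n | (ij.1 \in setT) && (ij.2 \in Y) && M ij.1 ij.2]).
f_equal; apply: eq_card => ij; rewrite !inE /=;
  by case: (ij.1 \in X); case: (ij.2 \in Y); case: (M ij.1 ij.2).
Qed.

Lemma ones_splitY (m n : nat) (M : 'M[bool]_(m, n)) X Y :
  (ones_in M X Y + ones_in M X (~: Y) = ones_in M X setT)%N.
Proof.
rewrite /ones_in -(cardsID [set ij : 'I_m * 'I_n | ij.2 \in Y]
   [set ij : 'I_m * 'I_n | (ij.1 \in X) && (ij.2 \in setT) && M ij.1 ij.2]).
f_equal; apply: eq_card => ij; rewrite !inE /=;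
  by case: (ij.1 \in X); case: (ij.2 \in Y); case: (M ij.1 ij.2).
Qed.

Lemma ones_le (m n : nat) (M : 'M[bool]_(m, n)) : (ones M <= m * n)%N.
Proof.
rewrite /ones /ones_in; apply: leq_trans (max_card _) _.
by rewrite card_prod !card_ord.
Qed.

Lemma disc_sum (m n : nat) (M : 'M[bool]_(m, n)) X Y :
  disc M X Y + disc M (~: X) Y + disc M X (~: Y) + disc M (~: X) (~: Y) = 0.
Proof.
rewrite /disc.
have hX := cardsC X; have hY := cardsC Y.
rewrite !card_ord in hX hY.
have e1 := ones_splitX M X Y.
have e2 := ones_splitX M X (~: Y).
have e3 := ones_splitY M setT Y.
have hm : ((#|X| + #|~: X|)%:R = m%:R :> rat) by rewrite hX.
have hn : ((#|Y| + #|~: Y|)%:R = n%:R :> rat) by rewrite hY.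
have ho : ((ones_in M X Y + ones_in M (~: X) Y + (ones_in M X (~: Y) + ones_in M (~: X) (~: Y)))%:R
   = (ones M)%:R :> rat).
  by rewrite e1 e2 e3.
rewrite !natrD in hm hn ho.
rewrite !natrM.
have hd : density M * (m%:R * n%:R) = (ones M)%:R.
  rewrite /density.
  case: (posnP (m * n)) => h.
    have : ones M = 0%N by apply/eqP; rewrite -leqn0 -h ones_le.
    by move=> ->; rewrite -natrM h !mul0r.
  by rewrite -natrM mulfVK // pnatr_eq0 -lt0n.
rewrite -hm -hn in hd.
move: hd; set p := density M => hd.
rewrite -ho in hd.
move: hd; set o1 := (ones_in M X Y)%:R; set o2 := (ones_in M (~: X) Y)%:R; set o3 := (ones_in M X (~: Y))%:R; set o4 := (ones_in M (~: X) (~: Y))%:R => hd.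
lra.
Qed.

Lemma le_minus (m n : nat) (M : 'M[bool]_(m, n)) X Y : - disc M X Y <= disc_minus M.
Proof.
rewrite /disc_minus.
apply: le_trans (le_bigmax _ (fun X => \big[Num.max/0]_(Y : {set 'I_n}) - disc M X Y) X).
exact: (le_bigmax _ (fun Y => - disc M X Y) Y).
Qed.

Lemma le_plus (m n : nat) (M : 'M[bool]_(m, n)) X Y : disc M X Y <= disc_plus M.
Proof.
rewrite /disc_plus.
apply: le_trans (le_bigmax _ (fun X => \big[Num.max/0]_(Y : {set 'I_n}) disc M X Y) X).
exact: (le_bigmax _ (fun Y => disc M X Y) Y).
Qed.

Lemma disc00 (m n : nat) (M : 'M[bool]_(m, n)) : disc M set0 set0 = 0.
Proof.
rewrite /disc cards0 mul0n mulr0 subr0.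
have -> : ones_in M set0 set0 = 0%N.
  by apply/eqP; rewrite cards_eq0; apply/eqP/setP => ij; rewrite !inE.
by [].
Qed.

Theorem claim2p1 (m n : nat) (M : 'M[bool]_(m, n)) :
  disc_plus M / 3 <= disc_minus M /\ disc_minus M / 3 <= disc_plus M.
Proof.
have m0 : 0 <= disc_minus M by have := le_minus M set0 set0; rewrite disc00 oppr0.
have p0 : 0 <= disc_plus M by have := le_plus M set0 set0; rewrite disc00.
split.
- suff : disc_plus M <= 3 * disc_minus M by move=> h; lra.
  rewrite /disc_plus; apply/bigmax_leP; split; first lra.
  move=> X _; apply/bigmax_leP; split; first lra.
  move=> Y _.
  have := disc_sum M X Y.
  have := le_minus M (~: X) Y; have := le_minus M X (~: Y);
  have := le_minus M (~: X) (~: Y); lra.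
- suff : disc_minus M <= 3 * disc_plus M by move=> h; lra.
  rewrite /disc_minus; apply/bigmax_leP; split; first lra.
  move=> X _; apply/bigmax_leP; split; first lra.
  move=> Y _.
  have := disc_sum M X Y.
  have := le_plus M (~: X) Y; have := le_plus M X (~: Y);
  have := le_plus M (~: X) (~: Y); lra.
Qed.
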